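(* Let $\mathcal{H}$ be a real Hilbert space, $A:\mathcal{H}\rightrightarrows\mathcal{H}$ maximal monotone, $p\geq2$ an integer, and $\varphi(\lambda,x)=\lambda^{1/(p-1)}\|x-(I+\lambda A)^{-1}x\|$ for $\lambda>0$. Then for all $x\in\mathcal{H}$ and $0<\lambda_1\leq\lambda_2$, \[ \left(\tfrac{\lambda_2}{\lambda_1}\right)^{\frac1{p-1}}\varphi(\lambda_1,x)\leq\varphi(\lambda_2,x)\leq\left(\tfrac{\lambda_2}{\lambda_1}\right)^{\frac p{p-1}}\varphi(\lambda_1,x). \] In addition, for any fixed $\lambda>0$, $\varphi(\lambda,x)=0$ if and only if $0\in Ax$.
   Context: $(I+\lambda A)^{-1}$ is the resolvent of $A$ of index $\lambda$. *)

(* Defs.v *)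
From HB Require Import structures.
From mathcomp Require Import all_boot all_order all_algebra.
From mathcomp Require Import all_classical all_reals all_analysis.
Set Implicit Arguments. Unset Strict Implicit. Unset Printing Implicit Defensive.
Import Order.TTheory GRing.Theory Num.Theory.
Import numFieldNormedType.Exports.
Local Open Scope classical_set_scope.
Local Open Scope ring_scope.

Definition is_inner_product (R : realType) (H : normedModType R)
  (ip : H -> H -> R) : Prop :=
  [/\ forall x y, ip x y = ip y x,
      forall a x y z, ip (a *: x + y) z = a * ip x z + ip y z
    & forall x, ip x x = `|x| ^+ 2].

Definition monotone_op (R : realType) (H : normedModType R)
  (ip : H -> H -> R) (A : H -> set H) : Prop :=
  forall x y u v, A x u -> A y v -> 0 <= ip (x - y) (u - v).

Definition maximal_monotone (R : realType) (H : normedModType R)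
  (ip : H -> H -> R) (A : H -> set H) : Prop :=
  monotone_op ip A /\
  forall B : H -> set H, monotone_op ip B ->
    (forall x, A x `<=` B x) -> forall x, B x = A x.

(* resolvent (I + lam A)^{-1} x : the (for maximal monotone A, unique) y with
   x \in y + lam A y; chosen via xget (default 0 if none exists). *)
Definition resolvent (R : realType) (H : normedModType R)
  (A : H -> set H) (lam : R) (x : H) : H :=
  xget 0 [set y | exists u, A y u /\ x = y + lam *: u].

Definition phi (R : realType) (H : normedModType R) (A : H -> set H)
  (p : nat) (lam : R) (x : H) : R :=
  lam `^ (1 / (p.-1)%:R) * `|x - resolvent A lam x|.

(* Main.v *)
Require Import Defs.
From HB Require Import structures.
From mathcomp Require Import all_boot all_order all_algebra.
From mathcomp Require Import all_classical all_reals all_analysis.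
From mathcomp Require Import ring lra.
Import Order.TTheory GRing.Theory Num.Theory.
Import numFieldNormedType.Exports.
Local Open Scope classical_set_scope.
Local Open Scope ring_scope.
Set Implicit Arguments. Unset Strict Implicit.
Section IP.
Context (R : realType) (H : completeNormedModType R) (ip : H -> H -> R)
  (hip : is_inner_product ip).

Lemma ipC x y : ip x y = ip y x. Proof. by case: hip. Qed.
Lemma ip_lin a x y z : ip (a *: x + y) z = a * ip x z + ip y z. Proof. by case: hip. Qed.
Lemma ipxx x : ip x x = `|x| ^+ 2. Proof. by case: hip. Qed.
Lemma ip0l z : ip 0 z = 0.
Proof. have := ip_lin 1 0 0 z; rewrite scaler0 addr0 mul1r; lra. Qed.
Lemma ipDl x y z : ip (x + y) z = ip x z + ip y z.
Proof. by have := ip_lin 1 x y z; rewrite scale1r mul1r. Qed.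
Lemma ipZl a x z : ip (a *: x) z = a * ip x z.
Proof. by have := ip_lin a x 0 z; rewrite addr0 ip0l addr0. Qed.
Lemma ipNl x z : ip (- x) z = - ip x z.
Proof. by rewrite -scaleN1r ipZl mulN1r. Qed.
Lemma ipBl x y z : ip (x - y) z = ip x z - ip y z.
Proof. by rewrite ipDl ipNl. Qed.
Lemma ip0r z : ip z 0 = 0. Proof. by rewrite ipC ip0l. Qed.
Lemma ipDr x y z : ip z (x + y) = ip z x + ip z y.
Proof. by rewrite ipC ipDl !(ipC z). Qed.
Lemma ipZr a x z : ip z (a *: x) = a * ip z x.
Proof. by rewrite ipC ipZl ipC. Qed.
Lemma ipNr x z : ip z (- x) = - ip z x.
Proof. by rewrite ipC ipNl ipC. Qed.
Lemma ipBr x y z : ip z (x - y) = ip z x - ip z y.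
Proof. by rewrite ipDr ipNr. Qed.
Definition ipE := (ipDl, ipDr, ipBl, ipBr, ipNl, ipNr, ipZl, ipZr, ip0l, ip0r).

Lemma ipxx_ge0 x : 0 <= ip x x. Proof. by rewrite ipxx sqr_ge0. Qed.
Lemma ipxx_eq0 x : ip x x = 0 -> x = 0.
Proof. by rewrite ipxx => /eqP; rewrite sqrf_eq0 normr_eq0 => /eqP. Qed.

Lemma CS u v : ip u v <= `|u| * `|v|.
Proof.
have h := ipxx_ge0 (`|v| *: u - `|u| *: v).
rewrite !ipE (ipC v u) !ipxx in h.
have [a0|apos] := eqVneq `|u| 0.
  by move/eqP: a0; rewrite normr_eq0 => /eqP ->; rewrite ip0l normr0 mul0r.
have [b0|bpos] := eqVneq `|v| 0.
  by move/eqP: b0; rewrite normr_eq0 => /eqP ->; rewrite ip0r normr0 mulr0.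
have ha : 0 < `|u| by rewrite lt_neqAle eq_sym apos normr_ge0.
have hb : 0 < `|v| by rewrite lt_neqAle eq_sym bpos normr_ge0.
have hab : 0 < `|u| * `|v| by apply: mulr_gt0.
set a := `|u| in h ha hab *; set b := `|v| in h hb hab *; set c := ip u v in h *.
nra.
Qed.

Section Minty.
Variable G : H -> H -> Prop.
Hypothesis Gmono : forall x y u v, G x u -> G y v -> 0 <= ip (x - y) (u - v).
Hypothesis Gmax : forall x u, (forall y v, G y v -> 0 <= ip (x - y) (u - v)) -> G x u.
Hypothesis Gne : exists y v, G y v.

Definition Phi y v x u := ip x v + ip y u - ip y v + (ip x x + ip u u) / 2.
Definition Bnd x u M := forall y v, G y v -> Phi y v x u <= M.

Lemma Bnd_lb x u M : Bnd x u M -> ip x u + (ip x x + ip u u) / 2 <= M.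
Proof.
move=> hB; rewrite leNgt; apply/negP => hlt.
have Gxu : G x u.
  apply: Gmax => y v Gyv; have := hB y v Gyv; rewrite /Phi !ipE; lra.
by have := hB x u Gxu; rewrite /Phi; lra.
Qed.

Lemma N_ge x u : 0 <= ip x u + (ip x x + ip u u) / 2.
Proof. by have := ipxx_ge0 (x + u); rewrite !ipE (ipC u x); lra. Qed.

Definition S := [set M | exists x u, Bnd x u M].

Lemma S_inf : has_inf S.
Proof.
split.
  case: Gne => y0 [v0 G0]; exists (Phi y0 v0 y0 v0), y0, v0 => y v Gyv.
  have := Gmono G0 Gyv; rewrite /Phi !ipE; lra.
exists 0 => M [x [u hB]]; have := Bnd_lb hB; have := N_ge x u; lra.
Qed.

Lemma m_le x u M : Bnd x u M -> inf S <= M.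
Proof. move=> hB; apply: (ge_inf (proj2 S_inf)); by exists x, u. Qed.

Lemma Bnd_mid x1 u1 M1 x2 u2 M2 : Bnd x1 u1 M1 -> Bnd x2 u2 M2 ->
  Bnd (2^-1 *: (x1 + x2)) (2^-1 *: (u1 + u2))
    ((M1 + M2) / 2 - (ip (x1 - x2) (x1 - x2) + ip (u1 - u2) (u1 - u2)) / 8).
Proof.
move=> h1 h2 y v Gyv; have := h1 y v Gyv; have := h2 y v Gyv.
rewrite /Phi !ipE (ipC x2 x1) (ipC u2 u1); lra.
Qed.


Lemma inv_anti (N n : nat) : (N <= n)%N -> (n.+1%:R : R)^-1 <= (N.+1%:R)^-1.
Proof. by move=> hn; rewrite lef_pV2 ?posrE ?ltr0Sn // ler_nat ltnS. Qed.

Lemma small_inv (e : R) : 0 < e -> exists N : nat, (N.+1%:R)^-1 < e.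
Proof. move=> e0. exists (Num.truncn e^-1). by rewrite -ltf_pV2 ?(posrE,divr_gt0)// invrK truncnS_gt. Qed.

Lemma seq_cvg (xs : nat -> H) :
  (forall e : R, 0 < e -> exists N, forall n, (N <= n)%N -> `|xs N - xs n| < e) ->
  xs @ \oo --> lim (xs @ \oo).
Proof.
move=> hc. apply: cauchy_cvg. apply: cauchy_exP => e e0.
have [N hN] := hc e e0. exists (xs N). exists N => // n /= hn. rewrite -ball_normE /ball_ /=. exact: hN.
Qed.

Lemma rcvg (s : nat -> R) L : s @ \oo --> L -> forall e : R, 0 < e ->
  exists N, forall n, (N <= n)%N -> `|L - s n| < e.
Proof. move=> /cvgrPdist_lt h e e0. have [N _ hN] := h e e0. by exists N => n hn; apply: hN. Qed.

Lemma sqcvg (xs : nat -> H) (v : H) (x0 : H) : xs @ \oo --> x0 ->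
  (fun n => `|xs n + v| ^+ 2) @ \oo --> `|x0 + v| ^+ 2.
Proof. move=> h. have hn : (fun n => `|xs n + v|) @ \oo --> `|x0 + v|.
  apply: cvg_norm. apply: cvgD => //. exact: cvg_cst.
rewrite expr2. under eq_fun do rewrite expr2. exact: cvgM. Qed.

Lemma PhiE y v x u : Phi y v x u = (`|x + v| ^+ 2 + `|u + y| ^+ 2 - `|y + v| ^+ 2) / 2.
Proof. rewrite -!ipxx /Phi !ipE (ipC v x) (ipC y u) (ipC v y); lra. Qed.

Lemma lim_c (c K : R) : (forall t, 0 < t -> t <= 1 -> 0 <= c + t * K) -> 0 <= c.
Proof.
move=> h; rewrite leNgt; apply/negP => c0.
set d := 2 * (`|K| + 1) - c.
have d0 : 0 < d by rewrite /d; have := normr_ge0 K; lra.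
set t := - c / d.
have td : t * d = - c by rewrite /t mulfVK // gt_eqF.
have t0 : 0 < t by rewrite /t divr_gt0 // oppr_gt0.
have t1 : t <= 1.
  rewrite /t ler_pdivrMr // mul1r /d; have := normr_ge0 K; lra.
have := h t t0 t1.
have hK : K <= `|K| := ler_norm K.
have hK2 : t * K <= t * `|K| by rewrite ler_wpM2l // ltW.
have : t * (d - 2 * `|K|) > 0 by rewrite mulr_gt0 // /d; lra.
nra.
Qed.

Lemma minty0 : exists x u, G x u /\ x + u = 0.
Proof.
set m := inf S.
have hseq : forall n : nat, exists t : H * H * R,
    Bnd t.1.1 t.1.2 t.2 /\ t.2 < m + (n.+1%:R)^-1.
  move=> n; have e0 : 0 < (n.+1%:R : R)^-1 by rewrite invr_gt0 ltr0Sn.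
  have [M [x [u hB]] hM] := inf_adherent e0 S_inf.
  by exists (x, u, M); split.
case: (choice hseq) => f hf.
pose xs n := (f n).1.1; pose us n := (f n).1.2; pose Ms n := (f n).2.
have hB n : Bnd (xs n) (us n) (Ms n) by case: (hf n).
have hM n : Ms n < m + (n.+1%:R)^-1 by case: (hf n).
have hd n k : ip (xs n - xs k) (xs n - xs k) + ip (us n - us k) (us n - us k)
    < 4 * ((n.+1%:R)^-1 + (k.+1%:R)^-1).
  have := m_le (Bnd_mid (hB n) (hB k)); have := hM n; have := hM k; rewrite -/m.
  move: (n.+1%:R^-1 : R) (k.+1%:R^-1 : R) => an ak; lra.
have cauchy_gen (ws : nat -> H) :
    (forall n k, ip (ws n - ws k) (ws n - ws k) < 4 * ((n.+1%:R)^-1 + (k.+1%:R)^-1)) ->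
    forall e : R, 0 < e -> exists N, forall n, (N <= n)%N -> `|ws N - ws n| < e.
  move=> hw e e0.
  have e2 : 0 < e * e / 8 by rewrite divr_gt0 // mulr_gt0.
  have [N hN] := small_inv e2.
  exists N => n hn; have := hw N n; have := inv_anti hn; rewrite ipxx.
  have := normr_ge0 (ws N - ws n); move: hN.
  move: (`|ws N - ws n|) (N.+1%:R^-1 : R) (n.+1%:R^-1 : R) => a aN an.
  rewrite expr2 => h1 h2 h3 h4; rewrite ltNge; apply/negP => h5.
  have : e * e <= a * a by apply: ler_pM => //; apply: ltW.
  lra.
have hx : xs @ \oo --> lim (xs @ \oo).
  apply: seq_cvg; apply: cauchy_gen => n k; have := hd n k.
  have := ipxx_ge0 (us n - us k).
  move: (n.+1%:R^-1 : R) (k.+1%:R^-1 : R) => an ak; lra.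
have hu : us @ \oo --> lim (us @ \oo).
  apply: seq_cvg; apply: cauchy_gen => n k; have := hd n k.
  have := ipxx_ge0 (xs n - xs k).
  move: (n.+1%:R^-1 : R) (k.+1%:R^-1 : R) => an ak; lra.
set x0 := lim (xs @ \oo) in hx; set u0 := lim (us @ \oo) in hu.
have hB0 : Bnd x0 u0 m.
  move=> y v Gyv; rewrite leNgt; apply/negP => hlt.
  set L := Phi y v x0 u0 in hlt.
  have hs : (fun n => Phi y v (xs n) (us n)) @ \oo --> L.
    rewrite /L PhiE; under eq_fun do rewrite PhiE.
    apply: cvgMr_tmp; apply: cvgB; last exact: cvg_cst.
    apply: cvgD; first exact: sqcvg.
    exact: sqcvg.
  have e0 : 0 < (L - m) / 2 by rewrite divr_gt0 // subr_gt0.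
  have [N1 hN1] := rcvg hs e0.
  have [N2 hN2] := small_inv e0.
  have h1 := hN1 (maxn N1 N2) (leq_maxl _ _).
  have h2 := inv_anti (leq_maxr N1 N2).
  have h3 := hB (maxn N1 N2) y v Gyv.
  have h4 := hM (maxn N1 N2).
  have h5 := ler_norm (L - Phi y v (xs (maxn N1 N2)) (us (maxn N1 N2))).
  move: h1 h2 h3 h4 h5 hN2; move: ((maxn N1 N2).+1%:R^-1 : R) (N2.+1%:R^-1 : R) => a1 a2.
  move: (Phi _ _ _ _) (Ms _) (`|_|) => z1 z2 z3; lra.
have hlb := Bnd_lb hB0.
have hC y v : G y v ->
    ip x0 u0 + ip x0 x0 + ip u0 u0 <= ip y v + ip x0 y + ip u0 v.
  move=> Gyv; move: hlb.
  set X := ip x0 x0; set U := ip u0 u0; set Y := ip y y; set V := ip v v.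
  set P := ip x0 y; set Q := ip u0 v; set W := ip y v.
  move=> hlb; suff : 0 <= - m + W - (X + U) / 2 + P + Q by lra.
  apply: (@lim_c _ ((X + U) / 2 - P - Q + (Y + V) / 2)) => t t0 t1.
  pose xt := (1 - t) *: x0 + t *: y; pose ut := (1 - t) *: u0 + t *: v.
  have hBt : Bnd xt ut ((1 - t) * (m - (X + U) / 2) + t * W
                        + (ip xt xt + ip ut ut) / 2).
    move=> y' v' Gyv'.
    have e1 : (1 - t) * (Phi y' v' x0 u0 - (X + U) / 2) <= (1 - t) * (m - (X + U) / 2).
      by apply: ler_wpM2l; [rewrite subr_ge0 | rewrite lerD2r; apply: hB0].
    have e2 : t * (ip y v' + ip y' v - ip y' v') <= t * W.
      rewrite ler_pM2l //; have := Gmono Gyv Gyv'; rewrite /W !ipE; lra.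
    have -> : Phi y' v' xt ut = (1 - t) * (Phi y' v' x0 u0 - (X + U) / 2)
        + t * (ip y v' + ip y' v - ip y' v') + (ip xt xt + ip ut ut) / 2.
      by rewrite /Phi /X /U /xt /ut !ipE; ring.
    lra.
  have := m_le hBt; rewrite /xt /ut !ipE (ipC y x0) (ipC v u0) -/X -/U -/Y -/V -/P -/Q.
  move=> hm.
  have : 0 <= t * (- m + W - (X + U) / 2 + P + Q + t * ((X + U) / 2 - P - Q + (Y + V) / 2)).
    move: hm; set lhs := (Z in _ <= Z); move=> hm.
    have -> : t * (- m + W - (X + U) / 2 + P + Q + t * ((X + U) / 2 - P - Q + (Y + V) / 2))
       = lhs - m :> R.
      rewrite /lhs; clearbody X U Y V P Q W m; lra.
    by rewrite subr_ge0.
  by rewrite pmulr_rge0.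
have Gn : G (- u0) (- x0).
  apply: Gmax => y v Gyv; have := hC y v Gyv; have := ipxx_ge0 (x0 + u0).
  rewrite !ipE ?(ipC u0 x0) ?(ipC y x0) ?(ipC v u0); lra.
have hz : x0 + u0 = 0.
  apply: ipxx_eq0; apply/eqP; rewrite eq_le ipxx_ge0 andbT.
  have := hC _ _ Gn; rewrite !ipE (ipC u0 x0); lra.
exists x0, u0; split => //.
have e1 : - u0 = x0 by apply/eqP; rewrite eq_sym -subr_eq0 opprK hz.
have e2 : - x0 = u0 by apply/eqP; rewrite eq_sym -subr_eq0 opprK addrC hz.
by move: Gn; rewrite e1 e2.
Qed.

End Minty.

Section Res.
Variable A : H -> set H.
Hypothesis hmax : maximal_monotone ip A.

Lemma Amono x y u v : A x u -> A y v -> 0 <= ip (x - y) (u - v).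
Proof. by case: hmax => hm _; apply: hm. Qed.

Lemma related_A x u : (forall y v, A y v -> 0 <= ip (x - y) (u - v)) -> A x u.
Proof.
move=> hr.
pose B := fun y : H => [set w | A y w \/ (y = x /\ w = u)].
have Bm : monotone_op ip B.
  move=> x1 y1 u1 v1 [h1|[-> ->]] [h2|[-> ->]].
  - exact: Amono h1 h2.
  - have := hr _ _ h1; rewrite !ipE; lra.
  - exact: hr.
  - by rewrite subrr ip0l.
have := (proj2 hmax) B Bm (fun y w h => or_introl h) x.
by move=> <-; right.
Qed.

Lemma A_ne : exists y v, A y v.
Proof.
case: (EM (exists y v, A y v)) => // hn.
exists 0, 0; apply: related_A => y v hyv; exfalso; apply: hn; by exists y, v.
Qed.

Lemma res_exists lam x : 0 < lam -> exists y u, A y u /\ x = y + lam *: u.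
Proof.
move=> l0.
pose G := fun y w : H => exists u, A y u /\ w = lam *: u - x.
have Gmono : forall x1 y1 u1 v1, G x1 u1 -> G y1 v1 -> 0 <= ip (x1 - y1) (u1 - v1).
  move=> x1 y1 _ _ [u1 [h1 ->]] [v1 [h2 ->]].
  have := Amono h1 h2; rewrite !ipE => h.
  have : 0 <= lam * (ip x1 u1 - ip x1 v1 - (ip y1 u1 - ip y1 v1)).
    by apply: mulr_ge0; [exact: ltW | lra].
  lra.
have Gmax : forall x' w', (forall y v, G y v -> 0 <= ip (x' - y) (w' - v)) -> G x' w'.
  move=> x' w' hr.
  pose u' := lam^-1 *: (w' + x).
  exists u'; split; last first.
    by rewrite /u' scalerA mulfV ?gt_eqF // scale1r addrK.
  apply: related_A => y v hyv.
  have e : u' - v = lam^-1 *: (w' - (lam *: v - x)).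
    rewrite opprB addrA scalerBr scalerA mulVf ?gt_eqF // scale1r.
    by rewrite /u'.
  rewrite e ipZr mulr_ge0 //; first by rewrite invr_ge0 ltW.
  apply: hr; by exists v.
have Gne : exists y v, G y v.
  have [y [v hyv]] := A_ne; exists y, (lam *: v - x), v; by split.
have [y [w [[u [hu ->]] hz]]] := minty0 Gmono Gmax Gne.
exists y, u; split => //.
apply/eqP; rewrite eq_sym -subr_eq0; apply/eqP; rewrite -hz.
by rewrite addrA.
Qed.

Lemma res_uniq lam x y u : 0 < lam -> A y u -> x = y + lam *: u ->
  resolvent A lam x = y.
Proof.
move=> l0 hyu hx; apply: xget_unique; first by exists u.
move=> y2 [u2 [h2 hx2]].
have e1 : y = x - lam *: u by rewrite hx addrK.
have e2 : y2 = x - lam *: u2 by rewrite hx2 addrK.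
have hm := Amono h2 hyu.
have hq : lam * ip (u2 - u) (u2 - u) = - ip (y2 - y) (u2 - u).
  rewrite e1 e2 !ipE (ipC u u2); lra.
have hq0 : ip (u2 - u) (u2 - u) = 0.
  apply/eqP; rewrite eq_le ipxx_ge0 andbT.
  have : lam * ip (u2 - u) (u2 - u) <= 0 by rewrite hq oppr_le0.
  by rewrite pmulr_rle0.
have := ipxx_eq0 hq0 => /eqP; rewrite subr_eq0 => /eqP hu.
by rewrite e1 e2 hu.
Qed.

Lemma res_in lam x : 0 < lam ->
  exists u, A (resolvent A lam x) u /\ x = resolvent A lam x + lam *: u.
Proof.
move=> l0; have [y [u [h hx]]] := res_exists x l0.
by rewrite (res_uniq l0 h hx); exists u.
Qed.

Lemma dist_eq lam x : 0 < lam -> exists u, A (resolvent A lam x) u /\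
   `|x - resolvent A lam x| = lam * `|u| /\ x = resolvent A lam x + lam *: u.
Proof.
move=> l0; have [u [h hx]] := res_in x l0; exists u; split => //; split => //.
by rewrite {1}hx addrAC subrr add0r normrZ gtr0_norm.
Qed.

Lemma res_ineq x l1 l2 : 0 < l1 -> l1 <= l2 ->
  `|x - resolvent A l1 x| <= `|x - resolvent A l2 x| /\
  l1 * `|x - resolvent A l2 x| <= l2 * `|x - resolvent A l1 x|.
Proof.
move=> l10 l12; have l20 : 0 < l2 by apply: lt_le_trans l12.
have [u1 [h1 [d1 hx1]]] := dist_eq x l10.
have [u2 [h2 [d2 hx2]]] := dist_eq x l20.
rewrite d1 d2.
have hm := Amono h1 h2.
have e1 : resolvent A l1 x = x - l1 *: u1 by rewrite {2}hx1 addrK.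
have e2 : resolvent A l2 x = x - l2 *: u2 by rewrite {2}hx2 addrK.
rewrite e1 e2 !ipE (ipC u2 u1) !ipxx in hm.
have cs := CS u1 u2.
have := normr_ge0 u1; have := normr_ge0 u2.
move: hm cs; move: (ip u1 u2) (`|u1|) (`|u2|) => c a b hm cs a0 b0.
have key : l1 * a ^+ 2 + l2 * b ^+ 2 <= (l1 + l2) * (a * b).
  have : (l1 + l2) * c <= (l1 + l2) * (a * b) by rewrite ler_wpM2l // ltW // addr_gt0.
  rewrite !expr2 in hm *; nra.
rewrite !expr2 in key.
have ba : b <= a.
  rewrite leNgt; apply/negP => hab.
  have h3 : l1 * a < l2 * b.
    apply: lt_le_trans (_ : l1 * b <= _); first by rewrite ltr_pM2l.
    by rewrite ler_wpM2r.
  nra.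
split.
  case: (ltrgtP a b) => hab; first by exfalso; move: ba; rewrite leNgt hab.
    nra.
  by rewrite hab ler_wpM2r.
rewrite mulrCA; apply: ler_wpM2l; first exact: ltW.
by rewrite ler_pM2l.
Qed.

End Res.
End IP.

Unset Implicit Arguments. Set Strict Implicit.

Theorem lemma2p2 (R : realType) (H : completeNormedModType R)
  (ip : H -> H -> R) (A : H -> set H) (p : nat) :
  is_inner_product ip -> maximal_monotone ip A -> (2 <= p)%N ->
  (forall (x : H) (lam1 lam2 : R), 0 < lam1 -> lam1 <= lam2 ->
     (lam2 / lam1) `^ (1 / (p.-1)%:R) * phi A p lam1 x <= phi A p lam2 x /\
     phi A p lam2 x <= (lam2 / lam1) `^ (p%:R / (p.-1)%:R) * phi A p lam1 x)
  /\
  (forall (lam : R), 0 < lam -> forall x : H, phi A p lam x = 0 <-> A x 0).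
Proof.
move=> hip hmax hp; rewrite /phi; set r := 1 / (p.-1)%:R.
have pr : p%:R / (p.-1)%:R = 1 + r :> R.
  have hp1 : (p.-1)%:R != 0 :> R by rewrite pnatr_eq0 -lt0n -ltnS prednK // ltnW.
  rewrite /r -[p in p%:R](@prednK p) ?(ltn_trans _ hp) // -addn1 natrD.
  by rewrite mulrDl divff // addrC mul1r.
split.
  move=> x l1 l2 l10 l12; have l20 : 0 < l2 by apply: lt_le_trans l12.
  have [h1 h2] := res_ineq hip hmax x l10 l12.
  move: h1 h2; set d1 := `|x - _|; set d2 := `|x - _|.
  move=> h1 h2.
  have k0 : 0 < l2 / l1 by rewrite divr_gt0.
  have kl : l2 / l1 * l1 = l2 by rewrite mulfVK // gt_eqF.
  have q0 : 0 < l2 `^ r by apply: powR_gt0.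
  split.
    rewrite mulrA -(powRM _ (ltW k0) (ltW l10)) kl.
    by apply: ler_wpM2l => //; apply: ltW.
  rewrite pr powRD; last by apply/implyP => _; rewrite (gt_eqF k0).
  rewrite (powRr1 (ltW k0)) -mulrA (mulrA (_ `^ r)) -(powRM _ (ltW k0) (ltW l10)) kl.
  move: q0 h2 kl k0; move: (l2 `^ r) (l2 / l1) => q k q0 h2 kl k0.
  have d10 : 0 <= d1 by apply: normr_ge0.
  have : l1 * (q * d2) <= l1 * (k * (q * d1)).
    have -> : l1 * (k * (q * d1)) = q * (l2 * d1) by rewrite -kl; ring.
    have -> : l1 * (q * d2) = q * (l1 * d2) by ring.
    by apply: ler_wpM2l => //; apply: ltW.
  by rewrite ler_pM2l.
move=> lam l0 x.
have q0 : 0 < lam `^ r by apply: powR_gt0.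
split.
  move/eqP; rewrite mulf_eq0 (gt_eqF q0) /= normr_eq0 subr_eq0 => /eqP hx.
  have [u [hu hxu]] := res_in hip hmax x l0.
  rewrite -hx in hu hxu.
  have : lam *: u = 0 by apply: (@addrI _ x); rewrite addr0 -hxu.
  move/eqP; rewrite scaler_eq0 (gt_eqF l0) /= => /eqP u0.
  by rewrite -u0.
move=> hx0.
rewrite (res_uniq hip hmax l0 hx0 (_ : x = x + lam *: 0)) ?subrr ?normr0 ?mulr0 //.
by rewrite scaler0 addr0.
Qed.
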